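(* Let $(G,\varphi)$ be a complex unit gain graph, let $u$ be a pendant vertex of $G$ with neighbour $v$, and let $G_0=G-\{u,v\}$. Then $r(G,\varphi)=2|V(G)|-2c(G)-2\alpha(G)$ if and only if $v$ does not lie on any cycle of $G$ and $r(G_0,\varphi)=2|V(G_0)|-2c(G_0)-2\alpha(G_0)$.
   Context: A complex unit gain graph $(G,\varphi)$ is a simple finite graph $G$ with a gain function $\varphi$ assigning to each oriented edge $e_{ij}$ a complex number of modulus $1$ with $\varphi(e_{ji})=\overline{\varphi(e_{ij})}$; its adjacency matrix has $(i,j)$-entry $\varphi(e_{ij})$ for adjacent $v_i,v_j$ and $0$ otherwise, and $r(G,\varphi)$ is its rank; induced subgraphs carry the restricted gain. $\alpha$ is the independence number and $c(G)=|E(G)|-|V(G)|+\omega(G)$ the cyclomatic number ($\omega$ = number of components). A pendant vertex is a vertex of degree $1$. *)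

(* Defs.v *)
From HB Require Import structures.
From mathcomp Require Import all_boot all_order all_algebra.
From mathcomp Require Import complex.
From mathcomp Require Import reals.
Set Implicit Arguments. Unset Strict Implicit. Unset Printing Implicit Defensive.
Import Order.TTheory GRing.Theory Num.Theory.
Local Open Scope ring_scope.

(* A simple graph G is given by a vertex set V : {set T} (T a finType) and an
   adjacency relation adj : rel T; only edges between vertices of V count. *)

Definition simple_graph (T : finType) (adj : rel T) : Prop :=
  (forall x y, adj x y = adj y x) /\ (forall x, ~~ adj x x).

Definition radj (T : finType) (V : {set T}) (adj : rel T) : rel T :=
  fun x y => [&& x \in V, y \in V & adj x y].

Definition unit_gain (R : realType) (T : finType) (V : {set T}) (adj : rel T)
  (phi : T -> T -> R[i]) : Prop :=
  forall x y, radj V adj x y -> `|phi x y| = 1 /\ phi y x = (phi x y)^*.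

Definition gain_adj_mx (R : realType) (T : finType) (V : {set T}) (adj : rel T)
  (phi : T -> T -> R[i]) : 'M[R[i]]_#|V| :=
  \matrix_(i, j) (if adj (enum_val i) (enum_val j)
                  then phi (enum_val i) (enum_val j) else 0).

Definition gain_rank (R : realType) (T : finType) (V : {set T}) (adj : rel T)
  (phi : T -> T -> R[i]) : nat := \rank (gain_adj_mx V adj phi).

Definition edge_set (T : finType) (V : {set T}) (adj : rel T) : {set {set T}} :=
  [set e : {set T} | [exists x, exists y, radj V adj x y && (e == [set x; y])]].

Definition n_components (T : finType) (V : {set T}) (adj : rel T) : nat :=
  #|[set [set y in V | connect (radj V adj) x y] | x in V]|.

Definition cyclomatic (T : finType) (V : {set T}) (adj : rel T) : int :=
  (#|edge_set V adj|)%:Z - (#|V|)%:Z + (n_components V adj)%:Z.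

Definition independent (T : finType) (V : {set T}) (adj : rel T) (S : {set T}) : bool :=
  (S \subset V) && [forall x in S, forall y in S, ~~ adj x y].

Definition indep_number (T : finType) (V : {set T}) (adj : rel T) : nat :=
  \max_(S : {set T} | independent V adj S) #|S|.

Definition on_cycle (T : finType) (V : {set T}) (adj : rel T) (v : T) : Prop :=
  exists p : seq T, [/\ uniq p, (3 <= size p)%N, v \in p & cycle (radj V adj) p].

Definition pendant (T : finType) (V : {set T}) (adj : rel T) (u : T) : Prop :=
  u \in V /\ #|[set w in V | adj u w]| = 1%N.

(* Main.v *)
Require Import Defs.
From HB Require Import structures.
From mathcomp Require Import all_boot all_order all_algebra.
From mathcomp Require Import complex.
From mathcomp Require Import reals.
From mathcomp Require Import zify.
From Stdlib Require Import Classical.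
Import Order.TTheory GRing.Theory Num.Theory.
Set Implicit Arguments. Unset Strict Implicit. Unset Printing Implicit Defensive.

Section Mx.
Local Open Scope ring_scope.
Variable F : fieldType.

Lemma rank_mxsub m n m' n' (f : 'I_m' -> 'I_m) (g : 'I_n' -> 'I_n) (A : 'M[F]_(m,n)) :
  (\rank (mxsub f g A) <= \rank A)%N.
Proof.
have -> : mxsub f g A = rowsub f (colsub g A) by apply/matrixP=> i j; rewrite !mxE.
rewrite rowsubE; apply: leq_trans (mxrankM_maxr _ _) _.
rewrite -mxrank_tr -[X in (_ <= X)%N]mxrank_tr.
have -> : (colsub g A)^T = rowsub g A^T by apply/matrixP=> i j; rewrite !mxE.
by rewrite rowsubE; apply: mxrankM_maxr.
Qed.

Lemma rank_relabel (T : finType) (E : T -> T -> F) k1 k2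
   (w1 : 'I_k1 -> T) (w2 : 'I_k2 -> T) :
  (forall i, w2 i \in codom w1) ->
  (\rank (\matrix_(i, j) E (w2 i) (w2 j)) <= \rank (\matrix_(i, j) E (w1 i) (w1 j)))%N.
Proof.
move=> H; set g := fun i => iinv (H i).
have -> : \matrix_(i, j) E (w2 i) (w2 j) = mxsub g g (\matrix_(i, j) E (w1 i) (w1 j)).
  by apply/matrixP=> i j; rewrite !mxE /g !f_iinv.
exact: rank_mxsub.
Qed.

Lemma rank_LDU m n (L : 'M[F]_m) (D : 'M[F]_(m, n)) (U : 'M[F]_n) :
  L \in unitmx -> U \in unitmx -> \rank (L *m D *m U) = \rank D.
Proof.
move=> HL HU; rewrite mxrankMfree ?row_free_unit //.
by have /eqmxMfull -> : row_full L by rewrite row_full_unit.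
Qed.

Lemma rank_pendant_block n (P : 'M[F]_2) (Q : 'M[F]_(2, n)) (Q' : 'M[F]_(n, 2)) (A0 : 'M[F]_n) :
  P ord0 ord0 = 0 -> P ord0 ord_max != 0 -> P ord_max ord0 != 0 ->
  (forall j, Q ord0 j = 0) -> (forall i, Q' i ord0 = 0) ->
  \rank (block_mx P Q Q' A0) = (2 + \rank A0)%N.
Proof.
move=> H00 Ha Hc HQ HQ'.
set a := P ord0 ord_max; set c := P ord_max ord0.
pose Y : 'M[F]_(2, n) := \matrix_(i, j) (if i == ord0 then Q ord_max j / c else 0).
pose X : 'M[F]_(n, 2) := \matrix_(i, j) (if j == ord0 then Q' i ord_max / a else 0).
have e2 : forall i : 'I_2, i = ord0 \/ i = ord_max.
  by case=> [[|[|k]] Hk]; [left; exact/val_inj | right; exact/val_inj | ].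
have PY : P *m Y = Q.
  apply/matrixP=> i j; rewrite !mxE !big_ord_recl big_ord0 !mxE /=.
  case: (e2 i)=> ->; rewrite -/a -/c ?H00 ?mul0r ?mulr0 ?addr0 ?add0r /=.
    by rewrite HQ.
  by rewrite mulrC divfK.
have XP : X *m P = Q'.
  apply/matrixP=> i j; rewrite !mxE !big_ord_recl big_ord0 !mxE /=.
  case: (e2 j)=> ->; rewrite -/a -/c ?H00 ?mul0r ?mulr0 ?addr0 ?add0r /=.
    by rewrite HQ'.
  by rewrite divfK.
have XQ : X *m Q = 0.
  apply/matrixP=> i j; rewrite !mxE !big_ord_recl big_ord0 !mxE /=.
  by rewrite HQ mulr0 mul0r !addr0.
pose L : 'M[F]_(2 + n) := block_mx 1%:M 0 X 1%:M.
pose U : 'M[F]_(2 + n) := block_mx 1%:M Y 0 1%:M.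
pose D : 'M[F]_(2 + n) := block_mx P 0 0 A0.
have HB : block_mx P Q Q' A0 = L *m D *m U.
  rewrite /L /D /U !mulmx_block !(mul1mx, mulmx1, mul0mx, mulmx0, addr0, add0r).
  by rewrite XP PY -XP -mulmxA PY XQ add0r.
have uL : L \in unitmx by rewrite unitmxE det_lblock !det1 mulr1 unitr1.
have uU : U \in unitmx by rewrite unitmxE det_ublock !det1 mulr1 unitr1.
rewrite HB rank_LDU // /D rank_diag_block_mx; congr (_ + _)%N.
apply: mxrank_unit; rewrite unitmxE (expand_det_row _ ord0) !big_ord_recl big_ord0.
rewrite /cofactor !det_mx11 !mxE /= -/a H00 mul0r add0r addr0.
rewrite unitfE expr1 mulN1r mulrN oppr_eq0 mulf_neq0 //.
have E1 : forall j : 'I_1, lift ord0 j = ord_max :> 'I_2 by move=> j; apply/val_inj; rewrite /= ord1.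
have E0 : forall j : 'I_1, lift ord_max j = ord0 :> 'I_2 by move=> j; apply/val_inj; rewrite /= ord1.
all: rewrite ?E1 ?E0. all: try done. by move: Hc; congr (P _ _ != 0); apply/val_inj.
Qed.
End Mx.

Section Graph.
Variables (T : finType) (adj : rel T).
Hypothesis adj_sym : forall x y, adj x y = adj y x.
Hypothesis adj_irr : forall x, ~~ adj x x.
Implicit Types (V W S : {set T}) (x y z a b : T).

Definition nbr (V : {set T}) x := [set w in V | adj x w].
Definition comp (V : {set T}) y := [set z in V | connect (radj V adj) y z].

Lemma radj_sym V : symmetric (radj V adj).
Proof. by move=> x y; rewrite /radj adj_sym andbCA. Qed.

Lemma connect_symV V x y : connect (radj V adj) x y = connect (radj V adj) y x.
Proof. exact: (sym_connect_sym (radj_sym V)). Qed.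

Lemma radj_neq V x y : radj V adj x y -> x != y.
Proof. by move=> /and3P[_ _ H]; apply/eqP => E; move: H; rewrite E (negbTE (adj_irr y)). Qed.

Lemma radjS W V : W \subset V -> subrel (radj W adj) (radj V adj).
Proof. by move=> sWV x y /and3P[xW yW H]; rewrite /radj H !(subsetP sWV). Qed.

Lemma connectS W V x y : W \subset V -> connect (radj W adj) x y -> connect (radj V adj) x y.
Proof.
move=> sWV; apply: connect_sub => a b /(radjS sWV) H; exact: connect1.
Qed.

Lemma path_avoid V x a p : a != x -> x \notin p -> path (radj V adj) a p ->
  path (radj (V :\ x) adj) a p.
Proof.
elim: p a => //= b p IH a ax; rewrite inE negb_or => /andP[bx xp] /andP[/and3P[aV bV ab] pp].
rewrite IH 1?eq_sym // andbT /radj !in_setD1 aV bV ab ax andbT /=.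
by rewrite eq_sym bx.
Qed.

Lemma path_inV V a p : path (radj V adj) a p -> {subset p <= V}.
Proof.
elim: p a => //= b p IH a /andP[/and3P[_ bV _] pp] y; rewrite inE => /orP[/eqP->//|].
exact: IH pp y.
Qed.

Lemma in_comp V y z : (z \in comp V y) = (z \in V) && connect (radj V adj) y z.
Proof. by rewrite inE. Qed.

Lemma comp_eq V y z : connect (radj V adj) y z -> comp V y = comp V z.
Proof.
move=> yz; apply/setP=> w; rewrite !in_comp; case: (w \in V) => //=.
apply/idP/idP => H; first by apply: connect_trans H; rewrite connect_symV.
exact: connect_trans yz H.
Qed.

Lemma comp_self V y : y \in V -> y \in comp V y.
Proof. by move=> yV; rewrite in_comp yV connect0. Qed.

Lemma comp_eqE V y z : y \in V -> comp V y = comp V z -> connect (radj V adj) z y.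
Proof. by move=> yV E; move: (comp_self yV); rewrite E in_comp => /andP[]. Qed.


Lemma nbr_neq V x w : w \in nbr V x -> w != x.
Proof. by rewrite inE => /andP[_ H]; apply/eqP => E; move: H; rewrite E (negbTE (adj_irr x)). Qed.

Lemma card_edges V x : x \in V ->
  #|edge_set V adj| = (#|edge_set (V :\ x) adj| + #|nbr V x|)%N.
Proof.
move=> xV.
have E : edge_set V adj = edge_set (V :\ x) adj :|: [set [set x; w] | w in nbr V x].
  apply/setP=> e; rewrite in_setU !inE; apply/idP/idP.
    case/existsP=> a /existsP[b /andP[rab /eqP->]].
    case: (eqVneq a x) => [Ea | ax].
      apply/orP; right; apply/imsetP; exists b => //.
        by case/and3P: rab => _ bV H; rewrite inE bV -Ea H.
      by rewrite Ea.
    case: (eqVneq b x) => [Eb | bx].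
      apply/orP; right; apply/imsetP; exists a => //.
        by case/and3P: rab => aV _ H; rewrite inE aV adj_sym -Eb H.
      by rewrite Eb setUC.
    apply/orP; left; apply/existsP; exists a; apply/existsP; exists b.
    case/and3P: rab => aV bV H.
    by rewrite /radj !in_setD1 aV bV ax bx H eqxx.
  case/orP=> [/existsP[a /existsP[b /andP[rab /eqP->]]] | /imsetP[w wN ->]].
    apply/existsP; exists a; apply/existsP; exists b.
    by rewrite (radjS (subD1set V x) rab) eqxx.
  apply/existsP; exists x; apply/existsP; exists w.
  by move: wN; rewrite inE => /andP[wV H]; rewrite /radj xV wV H eqxx.
rewrite E cardsU.
have -> : edge_set (V :\ x) adj :&: [set [set x; w] | w in nbr V x] = set0.
  apply/setP=> e; rewrite !inE; apply/negP => /andP[/existsP[a /existsP[b /andP[rab /eqP Ee]]]].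
  case/imsetP=> w _ Ew; have : x \in e by rewrite Ew !inE eqxx.
  rewrite Ee !inE; case/and3P: rab; rewrite !in_setD1.
  by case/andP=> ax _; case/andP=> bx _ _; rewrite !(eq_sym x) (negbTE ax) (negbTE bx).
rewrite cards0 subn0 card_in_imset //.
move=> w1 w2 w1N w2N E12; have : w1 \in [set x; w2] by rewrite -E12 !inE eqxx orbT.
by rewrite !inE (negbTE (nbr_neq w1N)) /= => /eqP.
Qed.

Lemma nbr_conn V x y : y \in comp V x -> y != x ->
  exists2 w, w \in nbr V x & connect (radj (V :\ x) adj) w y.
Proof.
rewrite in_comp => /andP[yV /connectP[p pp ->]] yx.
case/shortenP: pp yx => p' pp' uq _; case: p' pp' uq => [|w q] /=; first by rewrite eqxx.
move=> /andP[/and3P[xV wV H] qp]; rewrite inE negb_or => /andP[/andP[xw xq] _] _.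
exists w; first by rewrite inE wV H.
apply/connectP; exists q => //; apply: path_avoid => //; by rewrite eq_sym.
Qed.

Lemma ncomp_del V x : x \in V ->
  (n_components V adj + #|comp (V :\ x) @: nbr V x| = n_components (V :\ x) adj + 1)%N.
Proof.
move=> xV; set W := V :\ x; set K := comp V x.
have nV : n_components V adj = #|comp V @: V| by [].
have nW : n_components W adj = #|comp W @: W| by [].
have KV : K \subset V by apply/subsetP=> y; rewrite in_comp => /andP[].
have xK : x \in K by apply: comp_self.
have inK y : y \in V -> (y \in K) = connect (radj V adj) y x.
  by move=> yV; rewrite in_comp yV /= connect_symV.
have Ea : comp V @: V = K |: comp V @: (V :\: K).
  apply/setP=> S; rewrite !inE; apply/imsetP/orP.
    case=> y yV ->; case: (boolP (y \in K)) => yK.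
      by left; rewrite (comp_eq (_ : connect _ y x)) // -inK.
    by right; apply/imsetP; exists y => //; rewrite inE yK.
  case=> [/eqP-> | /imsetP[y]]; first by exists x.
  by rewrite inE => /andP[_ yV] ->; exists y.
have KA : K \notin comp V @: (V :\: K).
  apply/imsetP=> [[y]]; rewrite inE => /andP[yK yV] EK.
  by move: (xK); rewrite EK in_comp => /andP[_ H]; move: yK; rewrite inK // H.
have Ec : {in V :\: K, comp V =1 comp W}.
  move=> y; rewrite inE => /andP[yK yV]; apply/setP=> z; rewrite !in_comp; apply/idP/idP.
    case/andP=> zV /connectP[p pp Ez].
    have xp : x \notin y :: p.
      by apply/negP => /(path_connect pp) H; move: yK; rewrite inK // H.
    have zx : z != x by apply: contraNneq xp => <-; rewrite Ez mem_last.
    move: xp; rewrite inE negb_or => /andP[xy xp].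
    rewrite in_setD1 zx zV /=; apply/connectP; exists p => //.
    by apply: path_avoid => //; rewrite eq_sym.
  case/andP=> zW H; rewrite (subsetP (subD1set V x) _ zW) /=.
  exact: connectS (subD1set V x) H.
have EW : W = (V :\: K) :|: (K :\ x).
  apply/setP=> y; rewrite in_setU in_setD !in_setD1; case: (boolP (y \in K)) => yK /=.
    by rewrite (subsetP KV _ yK) !andbT.
  rewrite andbF orbF; case: (eqVneq y x) => [E|//]; by move: yK; rewrite E xK.
have Ef : comp W @: (K :\ x) = comp W @: nbr V x.
  apply/setP=> S; apply/imsetP/imsetP.
    case=> y; rewrite in_setD1 => /andP[yx yK] ->.
    case: (nbr_conn yK yx) => w wN wy; exists w => //; by apply: comp_eq; rewrite connect_symV.
  case=> w wN ->; exists w => //; rewrite in_setD1 (nbr_neq wN) /=.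
  move: wN; rewrite inE => /andP[wV H]; rewrite in_comp wV; apply: connect1.
  by rewrite /radj xV wV H.
have Dis : comp W @: (V :\: K) :&: comp W @: (K :\ x) = set0.
  apply/setP=> S; rewrite !inE; apply/negP=> /andP[/imsetP[y yVK ->] /imsetP[z zK Eyz]].
  move: yVK zK; rewrite inE in_setD1 => /andP[yK yV] /andP[zx zK].
  have yW : y \in W by rewrite in_setD1 yV andbT; apply/eqP=> E; move: yK; rewrite E xK.
  have /(connectS (subD1set V x)) zy := comp_eqE yW Eyz.
  move: yK; rewrite inK // connect_symV; apply/negP/negPn.
  apply: connect_trans _ zy; by rewrite connect_symV -inK // (subsetP KV).
rewrite nV nW.
have -> : comp W @: W = comp W @: (V :\: K) :|: comp W @: (K :\ x) by rewrite -imsetU -EW.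
rewrite Ea cardsU1 KA (eq_in_imset Ec) cardsU Dis cards0 subn0 Ef.
by rewrite add1n addSn addnC addn1.
Qed.

Lemma mem_last_cons (y : T) s : s != [::] -> last y s \in s.
Proof. by case/lastP: s => // q w _; rewrite last_rcons mem_rcons mem_head. Qed.

Lemma cycle_nbrs V x : on_cycle V adj x -> exists y, exists z,
  [/\ y \in nbr V x, z \in nbr V x, y != z & connect (radj (V :\ x) adj) y z].
Proof.
case=> p [up sp xp cp].
case: (rot_to xp) => i s Er.
have us : uniq (x :: s) by rewrite -Er rot_uniq.
have cs : cycle (radj V adj) (x :: s) by rewrite -Er rot_cycle.
have Hs : (2 <= size s)%N by move: sp; rewrite -(size_rot i) Er.
case: s {Er} us cs Hs => [|y s] //= /andP[xys /andP[ys us]] /andP[rxy].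
rewrite rcons_path => /andP[ps rzx] Hs.
have s0 : s != [::] by case: s Hs {ps rzx ys us xys}.
exists y, (last y s); split.
- by case/and3P: rxy => _ yV H; rewrite inE yV H.
- by case/and3P: rzx => zV _ H; rewrite inE zV adj_sym H.
- by apply: contraNneq ys => ->; apply: mem_last_cons.
apply/connectP; exists s => //; apply: path_avoid => //.
  by move: xys; rewrite inE negb_or eq_sym => /andP[].
by move: xys; rewrite inE negb_or => /andP[].
Qed.

Lemma nbrs_cycle V x y z : x \in V -> y \in nbr V x -> z \in nbr V x -> y != z ->
  connect (radj (V :\ x) adj) y z -> on_cycle V adj x.
Proof.
move=> xV yN zN yz /connectP[p pp Ez].
case/shortenP: pp Ez => p' pp' up' _ Ez.
have yx := nbr_neq yN.
have xp' : x \notin p'.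
  by apply/negP => /(path_inV pp'); rewrite in_setD1 eqxx.
have p0 : p' != [::] by apply: contraNneq yz => E; rewrite Ez E.
exists (x :: y :: p'); split => //.
- by move: up'; rewrite /= => ->; rewrite andbT inE negb_or xp' andbT eq_sym yx.
- by case: p' p0 {pp' up' xp' Ez}.
- exact: mem_head.
rewrite /= rcons_path; apply/and3P; split.
- by move: yN; rewrite inE => /andP[yV H]; rewrite /radj xV yV H.
- exact: sub_path (radjS (subD1set V x)) _ _ pp'.
by rewrite -Ez; move: zN; rewrite inE => /andP[zV H]; rewrite /radj xV zV adj_sym H.
Qed.

Lemma comp_nbr_le V x : (#|comp (V :\ x) @: nbr V x| <= #|nbr V x|)%N.
Proof. exact: leq_imset_card. Qed.

Lemma comp_nbr_lt V x : on_cycle V adj x ->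
  (#|comp (V :\ x) @: nbr V x| < #|nbr V x|)%N.
Proof.
move=> /cycle_nbrs [y [z [yN zN yz C]]]; rewrite ltn_neqAle comp_nbr_le andbT.
apply/negP => /imset_injP inj.
by move: yz; rewrite (inj y z yN zN) ?eqxx //; apply: comp_eq.
Qed.

Lemma comp_nbr_eq V x : x \in V -> ~ on_cycle V adj x ->
  #|comp (V :\ x) @: nbr V x| = #|nbr V x|.
Proof.
move=> xV nc; apply: card_in_imset => y z yN zN E; case: (eqVneq y z) => // yz; exfalso; apply: nc.
apply: (nbrs_cycle xV yN zN yz); rewrite connect_symV; apply: comp_eqE E.
by rewrite in_setD1 (nbr_neq yN); move: yN; rewrite inE => /andP[].
Qed.

Lemma cyc_del V x : x \in V -> cyclomatic V adj =
  (cyclomatic (V :\ x) adj + (#|nbr V x|%:Z - #|comp (V :\ x) @: nbr V x|%:Z))%R.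
Proof.
move=> xV; rewrite /cyclomatic (card_edges xV) (cardsD1 x V) xV.
have := ncomp_del xV; lia.
Qed.

Lemma cyc_le V x : x \in V -> (cyclomatic (V :\ x) adj <= cyclomatic V adj)%R.
Proof. move=> xV; rewrite (cyc_del xV); have := comp_nbr_le V x; lia. Qed.

Lemma cyc_lt V x : x \in V -> on_cycle V adj x ->
  (cyclomatic (V :\ x) adj + 1 <= cyclomatic V adj)%R.
Proof. move=> xV H; rewrite (cyc_del xV); have := comp_nbr_lt H; lia. Qed.

Lemma cyc_eq V x : x \in V -> ~ on_cycle V adj x ->
  cyclomatic (V :\ x) adj = cyclomatic V adj.
Proof. move=> xV H; rewrite (cyc_del xV) (comp_nbr_eq xV H); lia. Qed.

Lemma on_cycleS W V x : W \subset V -> on_cycle W adj x -> on_cycle V adj x.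
Proof.
move=> sWV [p [up sp xp cp]]; exists p; split => //.
exact: sub_cycle (radjS sWV) _ cp.
Qed.

Lemma pendant_nbr V u v : pendant V adj u -> v \in V -> adj u v -> nbr V u = [set v].
Proof.
case=> uV /eqP /cards1P [a Ea] vV uv.
have : v \in nbr V u by rewrite inE vV uv.
by rewrite /nbr Ea inE => /eqP ->.
Qed.

Lemma pendant_no_cycle V u : pendant V adj u -> ~ on_cycle V adj u.
Proof.
case=> uV c1 /cycle_nbrs [y [z [yN zN yz _]]].
have : (#|[set y; z]| <= #|nbr V u|)%N.
  by apply: subset_leq_card; apply/subsetP=> w; rewrite in_set2 => /orP[]/eqP->.
by rewrite cards2 yz /nbr c1.
Qed.

Lemma on_cycle_del_pendant V u v : pendant V adj u -> on_cycle V adj v ->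
  on_cycle (V :\ u) adj v.
Proof.
move=> pu [p [up sp vp cp]].
have up' : u \notin p.
  by apply/negP => up'; apply: (pendant_no_cycle pu); exists p.
exists p; split => //.
case: p up sp vp cp up' => [|a q] //= _ _ _ cp; rewrite inE negb_or => /andP[ua uq].
apply: path_avoid; first by rewrite eq_sym.
  by rewrite mem_rcons inE negb_or ua.
exact: cp.
Qed.

Lemma indepP V S : reflect (S \subset V /\ forall a b, a \in S -> b \in S -> ~~ adj a b)
  (independent V adj S).
Proof.
apply: (iffP andP) => [[sSV /forall_inP H] | [sSV H]]; split => //.
  by move=> a b aS bS; move/forall_inP: (H a aS); apply.
by apply/forall_inP => a aS; apply/forall_inP => b bS; apply: H.
Qed.

Lemma indep_max V : exists2 S, independent V adj S & indep_number V adj = #|S|.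
Proof.
have : (0 < #|[pred S | independent V adj S]|)%N.
  apply/card_gt0P; exists set0; rewrite inE; apply/indepP; split; first exact: sub0set.
  by move=> a b; rewrite inE.
by case/(eq_bigmax_cond (fun S : {set T} => #|S|)) => S SI E; exists S.
Qed.

Lemma indep_le V S : independent V adj S -> (#|S| <= indep_number V adj)%N.
Proof. by move=> H; apply: (leq_bigmax_cond S H). Qed.

Lemma indepS W V : W \subset V -> (indep_number W adj <= indep_number V adj)%N.
Proof.
move=> sWV; have [S /indepP [sSW H] ->] := indep_max W.
by apply: indep_le; apply/indepP; split => //; apply: subset_trans sWV.
Qed.

Lemma indep_isolated V x : x \in V -> nbr V x = set0 ->
  (indep_number (V :\ x) adj + 1 <= indep_number V adj)%N.
Proof.
move=> xV N0; have [S /indepP [sSW H] ->] := indep_max (V :\ x).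
have xS : x \notin S by apply/negP => /(subsetP sSW); rewrite in_setD1 eqxx.
have -> : (#|S| + 1 = #|x |: S|)%N by rewrite cardsU1 xS addnC.
apply: indep_le; apply/indepP; split.
  apply/subsetP=> y; rewrite in_setU1 => /orP[/eqP-> //|/(subsetP sSW)]; by rewrite in_setD1 => /andP[].
have nx : forall y, y \in V -> ~~ adj x y.
  move=> y yV; apply/negP => Hxy; have : y \in nbr V x by rewrite inE yV Hxy.
  by rewrite N0 inE.
move=> a b; rewrite !inE => /orP[/eqP->|aS] /orP[/eqP->|bS]; first exact: adj_irr.
- by apply: nx; move: (subsetP sSW b bS); rewrite in_setD1 => /andP[].
- by rewrite adj_sym; apply: nx; move: (subsetP sSW a aS); rewrite in_setD1 => /andP[].
exact: H.
Qed.

Lemma indep_pendant V u v : pendant V adj u -> v \in V -> adj u v ->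
  indep_number V adj = (indep_number (V :\ u :\ v) adj + 1)%N.
Proof.
move=> pu vV uv; have Nu := pendant_nbr pu vV uv; have uV := pu.1.
have nu : forall y, y \in V -> y != v -> ~~ adj u y.
  move=> y yV yv; apply/negP => H; have : y \in nbr V u by rewrite inE yV H.
  by rewrite Nu inE (negbTE yv).
apply/eqP; rewrite eqn_leq; apply/andP; split.
  have [S /indepP [sSV H] ->] := indep_max V.
  have : (#|S :\ u :\ v| <= indep_number (V :\ u :\ v) adj)%N.
    apply: indep_le; apply/indepP; split.
      apply/subsetP=> y; rewrite !in_setD1 => /and3P[yv yu yS].
      by rewrite yv yu (subsetP sSV).
    by move=> a b; rewrite !in_setD1 => /and3P[_ _ aS] /and3P[_ _ bS]; apply: H.
  rewrite (cardsD1 u S) (cardsD1 v (S :\ u)) in_setD1.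
  case: (boolP (u \in S)) => uS; case: (boolP (v \in S)) => vS /=; try lia.
  by move: (H u v uS vS); rewrite uv.
have [S /indepP [sSW H] ->] := indep_max (V :\ u :\ v).
have uS : u \notin S by apply/negP => /(subsetP sSW); rewrite !in_setD1 eqxx andbF.
have -> : (#|S| + 1 = #|u |: S|)%N by rewrite cardsU1 uS addnC.
have SV : forall y, y \in S -> y \in V /\ y != v.
  by move=> y /(subsetP sSW); rewrite !in_setD1 => /and3P[].
apply: indep_le; apply/indepP; split.
  by apply/subsetP=> y; rewrite in_setU1 => /orP[/eqP-> //|/SV []].
move=> a b; rewrite !inE => /orP[/eqP->|aS] /orP[/eqP->|bS]; first exact: adj_irr.
- by case: (SV b bS) => bV bv; apply: nu.
- by case: (SV a aS) => aV av; rewrite adj_sym; apply: nu.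
exact: H.
Qed.

Lemma edge_set0 : edge_set set0 adj = set0.
Proof.
apply/setP=> e; rewrite !inE; apply/negbTE/negP => /existsP[a /existsP[b /andP[/and3P[aV _ _] _]]].
by rewrite inE in aV.
Qed.

Lemma ncomp0 : n_components set0 adj = 0%N.
Proof. by rewrite /n_components imset0 cards0. Qed.

Lemma cyc0 : cyclomatic set0 adj = 0%R.
Proof. by rewrite /cyclomatic edge_set0 ncomp0 !cards0. Qed.

Lemma ncomp_gt0 V x : x \in V -> (0 < n_components V adj)%N.
Proof. by move=> xV; apply/card_gt0P; exists (comp V x); apply: imset_f. Qed.

Lemma handshake V : (\sum_(y in V) #|nbr V y| = 2 * #|edge_set V adj|)%N.
Proof.
elim: {V}_.+1 {-2}V (ltnSn #|V|) => // n IH V HV.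
case: (set_0Vmem V) => [-> | [x xV]]; first by rewrite big_set0 edge_set0 cards0.
set W := V :\ x.
have HW : (#|W| < n)%N by move: HV; rewrite (cardsD1 x V) xV.
rewrite (big_setD1 x xV) (card_edges xV) /=.
have E1 : forall y, y \in W -> #|nbr V y| = (#|nbr W y| + adj x y)%N.
  move=> y yW; rewrite (cardsD1 x (nbr V y)) addnC; congr (_ + _)%N.
    by apply: eq_card => z; rewrite !inE andbA.
  by rewrite inE xV adj_sym.
rewrite (eq_bigr _ E1) big_split /= IH //.
have -> : (\sum_(y in W) adj x y = #|nbr V x|)%N.
  rewrite (eq_bigr (fun y => if adj x y then 1 else 0)%N); last by move=> y _; case: (adj x y).
  rewrite -big_mkcondr sum1dep_card; apply: eq_card => y; rewrite !inE.
  case: (boolP (adj x y)) => H; rewrite ?andbF ?andbT //.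
  case: (eqVneq y x) => // E; by move: H; rewrite E (negbTE (adj_irr x)).
rewrite /W; set a := #|nbr V x|; set b := #|edge_set _ adj|. by rewrite mulnDr addnCA [2 * a]mul2n -addnn.
Qed.

Lemma acyc_c0 V : (forall x, x \in V -> ~ on_cycle V adj x) -> cyclomatic V adj = 0%R.
Proof.
elim: {V}_.+1 {-2}V (ltnSn #|V|) => // n IH V HV ac.
case: (set_0Vmem V) => [-> | [x xV]]; first exact: cyc0.
rewrite -(cyc_eq xV (ac x xV)); apply: IH.
  by move: HV; rewrite (cardsD1 x V) xV.
move=> y; rewrite in_setD1 => /andP[_ yV] H; apply: (ac y yV).
exact: on_cycleS (subD1set V x) H.
Qed.

Lemma leaf_exists V : V != set0 -> (forall x, x \in V -> ~ on_cycle V adj x) ->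
  exists2 x, x \in V & (#|nbr V x| <= 1)%N.
Proof.
move=> /set0Pn [x0 x0V] ac.
case: (boolP [exists x in V, #|nbr V x| <= 1]%N) => [/exists_inP [x xV H] | /exists_inPn H].
  by exists x.
exfalso.
have H2 : (\sum_(y in V) 2 <= \sum_(y in V) #|nbr V y|)%N.
  by apply: leq_sum => y yV; move: (H y yV); rewrite -ltnNge.
move: H2; rewrite sum_nat_const handshake.
have := acyc_c0 ac; rewrite /cyclomatic.
have := ncomp_gt0 x0V; lia.
Qed.

End Graph.

Section Rank.
Local Open Scope ring_scope.
Variables (R : realType) (T : finType) (adj : rel T) (phi : T -> T -> R[i]).
Hypothesis adj_sym : forall x y, adj x y = adj y x.
Hypothesis adj_irr : forall x, ~~ adj x x.
Implicit Types (V W : {set T}).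

Definition Ent x y := if adj x y then phi x y else 0.

Lemma in_codom_enum V x (xV : x \in V) : x \in codom (fun i : 'I_#|V| => enum_val i).
Proof. by rewrite -(enum_rankK_in xV xV); apply: codom_f. Qed.

Lemma gain_rankS W V : W \subset V -> (gain_rank W adj phi <= gain_rank V adj phi)%N.
Proof.
move=> sWV; rewrite /gain_rank /gain_adj_mx.
apply: (@rank_relabel _ _ Ent) => i; apply: in_codom_enum.
exact: (subsetP sWV _ (enum_valP i)).
Qed.

Lemma gain_rank0 : gain_rank set0 adj phi = 0%N.
Proof. by apply/eqP; rewrite -leqn0; apply: leq_trans (rank_leq_row _) _; rewrite cards0. Qed.

Lemma unit_gainS W V : W \subset V -> unit_gain V adj phi -> unit_gain W adj phi.
Proof. by move=> sWV H x y /(radjS sWV); apply: H. Qed.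

Lemma phi_neq0 V x y : unit_gain V adj phi -> radj V adj x y -> phi x y != 0.
Proof.
move=> H r; apply/eqP => E; have := (H x y r).1; rewrite E normr0 => /eqP.
by rewrite eq_sym oner_eq0.
Qed.

Lemma gain_rank_pendant V u v : unit_gain V adj phi -> pendant V adj u -> v \in V -> adj u v ->
  gain_rank V adj phi = (2 + gain_rank (V :\ u :\ v) adj phi)%N.
Proof.
move=> ug pu vV uv; have uV := pu.1; have Nu := pendant_nbr pu vV uv.
set V0 := V :\ u :\ v.
have nu : forall y, y \in V -> y != v -> ~~ adj u y.
  move=> y yV yv; apply/negP => H; have : y \in nbr adj V u by rewrite inE yV H.
  by rewrite Nu inE (negbTE yv).
have V0P : forall y, y \in V0 -> [/\ y \in V, y != v & y != u].
  by move=> y; rewrite !in_setD1 => /and3P[].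
pose w (k : 'I_(2 + #|V0|)) : T :=
  match split k with inl i => if i == ord0 then u else v | inr j => enum_val j end.
have wL : forall i, w (lshift _ i) = if i == ord0 then u else v.
  by move=> i; rewrite /w -[lshift _ i]/(unsplit (inl _ i)) unsplitK.
have wR : forall j, w (rshift 2 j) = enum_val j.
  by move=> j; rewrite /w -[rshift 2 j]/(unsplit (inr _ j)) unsplitK.
have E1 : gain_rank V adj phi = \rank (\matrix_(i, j) Ent (w i) (w j)).
  apply/eqP; rewrite eqn_leq; apply/andP; split; rewrite /gain_rank /gain_adj_mx.
    apply: (@rank_relabel _ _ Ent) => i.
    have yV := enum_valP i; set y := enum_val i in yV *.
    case: (eqVneq y u) => [->|yu].
      have -> : u = w (lshift _ ord0) by rewrite wL.
      by apply: codom_f.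
    case: (eqVneq y v) => [->|yv].
      have -> : v = w (lshift _ ord_max) by rewrite wL.
      by apply: codom_f.
    have yV0 : y \in V0 by rewrite !in_setD1 yv yu yV.
    by rewrite -(enum_rankK_in yV0 yV0) -wR; apply: codom_f.
  apply: (@rank_relabel _ _ Ent) => k; apply: in_codom_enum.
  case: (splitP k) => [i Ei | j Ej].
    have -> : k = lshift _ i by apply/val_inj.
    by rewrite wL; case: (i == ord0).
  have -> : k = rshift 2 j by apply/val_inj.
  by rewrite wR; case: (V0P _ (enum_valP j)).
rewrite E1 -[X in \rank X]submxK rank_pendant_block.
- congr (_ + _)%N; rewrite /gain_rank /gain_adj_mx; apply: congr1.
  by apply/matrixP => i j; rewrite !mxE !wR.
- by rewrite !mxE !wL eqxx /Ent (negbTE (adj_irr u)).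
- rewrite !mxE !wL eqxx /= /Ent uv; apply: (phi_neq0 ug).
  by rewrite /radj uV vV uv.
- rewrite !mxE !wL eqxx /= /Ent adj_sym uv; apply: (phi_neq0 ug).
  by rewrite /radj uV vV adj_sym uv.
- move=> j; rewrite !mxE wL wR eqxx /Ent.
  by case: (V0P _ (enum_valP j)) => yV yv _; rewrite (negbTE (nu _ yV yv)).
- move=> i; rewrite !mxE wL wR eqxx /Ent adj_sym.
  by case: (V0P _ (enum_valP i)) => yV yv _; rewrite (negbTE (nu _ yV yv)).
Qed.

End Rank.

Section LB.
Local Open Scope ring_scope.
Variables (R : realType) (T : finType) (adj : rel T) (phi : T -> T -> R[i]).
Hypothesis Hs : forall x y, adj x y = adj y x.
Hypothesis Hi : forall x, ~~ adj x x.

Lemma indep0 : indep_number set0 adj = 0%N.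
Proof.
have [S /indepP [sS _] ->] := indep_max adj set0.
by apply/eqP; rewrite cards_eq0 -subset0.
Qed.

Lemma lower_bound V : unit_gain V adj phi ->
  (2%:Z * (#|V|)%:Z - 2%:Z * cyclomatic V adj - 2%:Z * (indep_number V adj)%:Z
     <= (gain_rank V adj phi)%:Z)%R.
Proof.
elim: {V}_.+1 {-2}V (ltnSn #|V|) => // n IH V HV ug.
case: (eqVneq V set0) => [-> | V0].
  by rewrite gain_rank0 cyc0 indep0 cards0.
case: (classic (exists2 x, x \in V & on_cycle V adj x)) => [[x xV xc] | nc].
  have sW := subD1set V x.
  have := IH (V :\ x) _ (unit_gainS sW ug).
  have := cardsD1 x V; rewrite xV.
  have := cyc_lt Hs Hi xV xc; have := indepS adj sW; have := gain_rankS adj phi sW.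
  move: HV; lia.
have ac : forall x, x \in V -> ~ on_cycle V adj x by move=> x xV xc; apply: nc; exists x.
have [x xV] := leaf_exists Hs Hi V0 ac.
rewrite leq_eqVlt ltnS leqn0 => /orP[] dx.
  case/cards1P: dx => v Nv.
  have : v \in nbr adj V x by rewrite Nv inE.
  rewrite inE => /andP[vV xv].
  have px : pendant V adj x by split => //; rewrite -/(nbr adj V x) Nv cards1.
  have vx : v != x by apply/eqP => E; move: xv; rewrite E (negbTE (Hi x)).
  have sW := subD1set V x.
  have vW : v \in V :\ x by rewrite in_setD1 vx.
  have sW0 : V :\ x :\ v \subset V by apply: subset_trans (subD1set _ v) sW.
  have := IH (V :\ x :\ v) _ (unit_gainS sW0 ug).
  have := cardsD1 x V; rewrite xV.
  have := cardsD1 v (V :\ x); rewrite vW.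
  have := cyc_le Hs Hi xV; have := cyc_le Hs Hi vW.
  have := indep_pendant Hs Hi px vV xv; have := gain_rank_pendant (phi:=phi) Hs Hi ug px vV xv.
  move: HV; lia.
have N0 : nbr adj V x = set0 by apply/eqP; rewrite -cards_eq0.
have sW := subD1set V x.
have := IH (V :\ x) _ (unit_gainS sW ug).
have := cardsD1 x V; rewrite xV.
have := cyc_eq Hs Hi xV (ac x xV); have := indep_isolated Hs Hi xV N0; have := gain_rankS adj phi sW.
move: HV; lia.
Qed.

End LB.

Unset Implicit Arguments.
Local Open Scope ring_scope.
Theorem lemma4p6 (R : realType) (T : finType) (V : {set T}) (adj : rel T)
  (phi : T -> T -> R[i]) (u v : T) :
  simple_graph adj -> unit_gain V adj phi ->
  pendant V adj u -> v \in V -> adj u v ->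
  let V0 := V :\ u :\ v in
  ((gain_rank V adj phi)%:Z
     = 2%:Z * (#|V|)%:Z - 2%:Z * cyclomatic V adj - 2%:Z * (indep_number V adj)%:Z)
  <->
  (~ on_cycle V adj v /\
   (gain_rank V0 adj phi)%:Z
     = 2%:Z * (#|V0|)%:Z - 2%:Z * cyclomatic V0 adj - 2%:Z * (indep_number V0 adj)%:Z).
Proof.
move=> [Hs Hi] ug pu vV uv V0.
have uV := pu.1.
have vu : v != u by apply/eqP => E; move: uv; rewrite E (negbTE (Hi u)).
have vW : v \in V :\ u by rewrite in_setD1 vu.
have sW0 : V0 \subset V by apply: subset_trans (subD1set _ v) (subD1set V u).
have Hr := gain_rank_pendant (phi:=phi) Hs Hi ug pu vV uv.
have Ha := indep_pendant Hs Hi pu vV uv.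
have Hc1 := cyc_eq Hs Hi uV (pendant_no_cycle Hs pu).
have Hc2 := cyc_le Hs Hi vW.
have Hn1 := cardsD1 u V; rewrite uV in Hn1.
have Hn2 := cardsD1 v (V :\ u); rewrite vW in Hn2.
rewrite -/V0 in Hr Ha Hc2 Hn2.
split.
  move=> E.
  have LB := lower_bound Hs Hi (unit_gainS sW0 ug).
  have nc : ~ on_cycle V adj v.
    move=> /(on_cycle_del_pendant Hs pu) C.
    have := cyc_lt Hs Hi vW C; rewrite -/V0.
    move: E LB; lia.
  split => //.
  have := cyc_eq Hs Hi vW (fun C => nc (on_cycleS (subD1set V u) C)); rewrite -/V0.
  move: E; lia.
case=> nc E.
have := cyc_eq Hs Hi vW (fun C => nc (on_cycleS (subD1set V u) C)); rewrite -/V0.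
move: E; lia.
Qed.
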